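(* Let $N$ be finite, $\mathbf P$ stochastic on $N$, $0<\beta<1$, $\mathbf R\in\mathbb R^N$, $S\subseteq N$ and $\nu\in\mathbb{R}$. The stopping rule $\tau_S$ (continue while in $S$, stop upon first entering $S^c$) is optimal for the problem $\max_\tau\{f_i^\tau-\nu g_i^\tau\}$ over all stopping rules $\tau$, simultaneously for every initial state $i\in N$, if and only if $$\max\{\nu_j^S: j\in S^c\}\le\nu\le\min\{\nu_j^S: j\in S\},$$ with the conventions $\max\emptyset=-\infty$, $\min\emptyset=+\infty$.
   Context: $N$ is a finite state set, $\mathbf{P}=(p_{ij})$ stochastic, $\beta\in(0,1)$, $\mathbf R=(R_j)$; $X(t)$ the Markov chain with matrix $\mathbf P$, $\mathsf E_i$ expectation given $X(0)=i$, $S^c=N\setminus S$. Stopping rules are (possibly randomized) stopping times in $\{0,1,\dots\}\cup\{\infty\}$; $f_i^\tau=\mathsf{E}_i[\sum_{t=0}^{\tau-1}R_{X(t)}\beta^t]$, $g_i^\tau=\mathsf{E}_i[\sum_{t=0}^{\tau-1}\beta^t]$. For $S\subseteq N$, $\tau_S=\min\{t\ge0:X(t)\notin S\}$, $f_i^S=f_i^{\tau_S}$, $g_i^S=g_i^{\tau_S}$, $w_i^S=1+\beta\sum_jp_{ij}g_j^S-\beta g_i^S$ (which is positive), $r_i^S=R_i+\beta\sum_jp_{ij}f_j^S-\beta f_i^S$, and the marginal productivity rate is $\nu_i^S=r_i^S/w_i^S$. *)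

(* Defs.v *)
From HB Require Import structures.
From mathcomp Require Import all_boot all_order all_algebra.
From mathcomp Require Import all_classical all_reals all_analysis.
Set Implicit Arguments. Unset Strict Implicit. Unset Printing Implicit Defensive.
Import Order.TTheory GRing.Theory Num.Theory.
Import numFieldNormedType.Exports.
Local Open Scope ring_scope.

Section Defs.
Variables (R : realType) (N : finType).

Definition stochastic (P : N -> N -> R) : Prop :=
  (forall i j, 0 <= P i j) /\ (forall i, \sum_(j : N) P i j = 1).

(* A (possibly randomized) stopping rule: given the observed history
   h = [:: X(0); ...; X(t)] (and not having stopped before), stop at time t
   with probability sigma h. *)
Definition stopping_rule (sigma : seq N -> R) : Prop :=
  forall h, 0 <= sigma h <= 1.

Definition path_prob (P : N -> N -> R) (i : N) (t : nat) (h : t.+1.-tuple N) : R :=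
  (thead h == i)%:R * \prod_(s < t) P (nth i h s) (nth i h s.+1).

(* probability of not having stopped at times 0..t along h, i.e. of {tau > t} *)
Definition survive (sigma : seq N -> R) (t : nat) (h : t.+1.-tuple N) : R :=
  \prod_(s < t.+1) (1 - sigma (take s.+1 h)).

(* E_i[ r(X(t)) 1{tau > t} ] *)
Definition stage_term (P : N -> N -> R) (sigma : seq N -> R) (r : N -> R)
  (i : N) (t : nat) : R :=
  \sum_(h : t.+1.-tuple N) path_prob P i h * survive sigma h * r (nth i h t).

(* E_i[ sum_{t=0}^{tau-1} r(X(t)) beta^t ] *)
Definition disc_value (P : N -> N -> R) (beta : R) (sigma : seq N -> R)
  (r : N -> R) (i : N) : R :=
  limn (series (fun t => beta ^+ t * stage_term P sigma r i t)).

Definition f_val P beta (Rw : N -> R) sigma i := disc_value P beta sigma Rw i.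
Definition g_val P beta sigma i := disc_value P beta sigma (fun _ => 1) i.

Definition tau_S (S : {set N}) : seq N -> R :=
  fun h => if h is x :: h' then (last x h' \notin S)%:R else 0.

Definition fS P beta Rw S i := f_val P beta Rw (tau_S S) i.
Definition gS P beta S i := g_val P beta (tau_S S) i.

Definition wS P beta S i : R :=
  1 + beta * \sum_(j : N) P i j * gS P beta S j - beta * gS P beta S i.
Definition rS P beta Rw S i : R :=
  Rw i + beta * \sum_(j : N) P i j * fS P beta Rw S j - beta * fS P beta Rw S i.
Definition nuS P beta Rw S i : R := rS P beta Rw S i / wS P beta S i.

End Defs.
Arguments tau_S {R N} S _.

(* Main.v *)
Require Import Defs.
From HB Require Import structures.
From mathcomp Require Import all_boot all_order all_algebra.
From mathcomp Require Import all_classical all_reals all_analysis.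
From mathcomp Require Import ring lra.
Import Order.TTheory GRing.Theory Num.Theory.
Import numFieldNormedType.Exports.
Local Open Scope ring_scope.

Lemma sum_tupleS (R : realType) (T : finType) n (F : n.+1.-tuple T -> R) :
  \sum_(h : n.+1.-tuple T) F h =
  \sum_(x : T) \sum_(h : n.-tuple T) F [tuple of x :: h].
Proof.
rewrite pair_big /=.
rewrite (reindex (fun p : T * n.-tuple T => [tuple of p.1 :: p.2])) //=.
exists (fun h : n.+1.-tuple T => (thead h, [tuple of behead h])).
  move=> [x h] _ /=; rewrite theadE; congr pair; exact: val_inj.
by move=> h _ /=; rewrite -tuple_eta.
Qed.

Lemma sum_tuple0 (R : realType) (T : finType) (F : 0.-tuple T -> R) :
  \sum_(h : 0.-tuple T) F h = F [tuple].
Proof. by rewrite (big_pred1 [tuple]) // => h; apply/esym/eqP; exact: tuple0. Qed.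

Set Implicit Arguments. Unset Strict Implicit.

Section S.
Variables (R : realType) (N : finType) (P : N -> N -> R).

Definition shiftS (sigma : seq N -> R) (i : N) : seq N -> R := fun h => sigma (i :: h).

Lemma sum_eq1 (F : N -> R) (a : N) : \sum_(x : N) (x == a)%:R * F x = F a.
Proof.
rewrite (bigD1 a) //= eqxx mul1r big1 ?addr0 // => x /negbTE ->; by rewrite mul0r.
Qed.

Lemma ST0 sigma r i : stage_term P sigma r i 0 = (1 - sigma [:: i]) * r i.
Proof.
rewrite /stage_term sum_tupleS.
under eq_bigr do rewrite sum_tuple0.
rewrite /path_prob /survive /=.
under eq_bigr do rewrite theadE big_ord0 big_ord1 /= mulr1.
rewrite -(sum_eq1 (fun x => (1 - sigma [:: x]) * r x)).
by apply: eq_bigr => x _; rewrite mulrA.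
Qed.

Lemma nth_tup {t} {h : t.+1.-tuple N} a b {s} : (s <= t)%N -> nth a h s = nth b h s.
Proof. by move=> st; apply: set_nth_default; rewrite size_tuple ltnS. Qed.

Lemma STS sigma r i t : stage_term P sigma r i t.+1 =
  (1 - sigma [:: i]) * \sum_(j : N) P i j * stage_term P (shiftS sigma i) r j t.
Proof.
rewrite /stage_term sum_tupleS.
rewrite /path_prob /survive /=.
under eq_bigr do under eq_bigr do rewrite theadE big_ord_recl big_ord_recl /= take0 -!mulrA.
under eq_bigr do rewrite -mulr_sumr.
rewrite (sum_eq1 (fun x => \sum_h _)).
rewrite big_distrr /=.
under [in RHS]eq_bigr do rewrite big_distrr big_distrr /=.
rewrite [in RHS]exchange_big /=.
apply: eq_bigr => h _.
have mE (a b c d : R) : a * (b * (c * d)) = c * (a * (b * d)).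
  by ring.
rewrite [in RHS](eq_bigr (fun j => (j == thead h)%:R * ((1 - sigma [:: i]) * (P i j * (\prod_(s < t) P (nth j h s) (nth j h s.+1) * (\prod_(s < t.+1) (1 - shiftS sigma i (take s.+1 h)) * r (nth j h t))))))); last by move=> j _; rewrite eq_sym; ring.
rewrite [in RHS]sum_eq1.
have -> : thead h = nth i h 0 by rewrite /thead (tnth_nth i).
rewrite /shiftS.
have -> : \prod_(s < t) P (nth (nth i h 0) h s) (nth (nth i h 0) h s.+1) =
          \prod_(s < t) P (nth i h (0 + s)) (nth i h (bump 0 s)).
  apply: eq_bigr => s _; rewrite add0n /bump leq0n add1n.
  by rewrite (nth_tup (nth i h 0) i (ltnW (ltn_ord s))) (nth_tup (nth i h 0) i (ltn_ord s)).
have -> : \prod_(s < t.+1) (1 - sigma (i :: take s.+1 h)) =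
          \prod_(s < t.+1) (1 - sigma (i :: take (bump 0 s) h)).
  by apply: eq_bigr => s _; rewrite /bump leq0n add1n.
rewrite (nth_tup (nth i h 0) i (leqnn t)).
ring.
Qed.
End S.

Section T.
Variables (R : realType) (N : finType) (P : N -> N -> R).
Hypothesis hP : stochastic P.
Local Notation SR := (@stopping_rule R N).

Lemma ST_ext t : forall (s1 s2 : seq N -> R) r i,
  (forall x h, s1 (x :: h) = s2 (x :: h)) ->
  stage_term P s1 r i t = stage_term P s2 r i t.
Proof.
elim: t => [|t IH] s1 s2 r i e; first by rewrite !ST0 (e i [::]).
rewrite !STS (e i [::]); congr (_ * _); apply: eq_bigr => j _; congr (_ * _).
by apply: IH => x h; exact: e.
Qed.

Lemma ST_lin t : forall (s : seq N -> R) r1 r2 nu i,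
  stage_term P s (fun x => r1 x - nu * r2 x) i t =
  stage_term P s r1 i t - nu * stage_term P s r2 i t.
Proof.
elim: t => [|t IH] s r1 r2 nu i; first by rewrite !ST0; ring.
rewrite !STS.
under eq_bigr do rewrite IH.
have -> : \sum_(j : N) P i j * (stage_term P (shiftS s i) r1 j t - nu * stage_term P (shiftS s i) r2 j t)
  = \sum_(j : N) P i j * stage_term P (shiftS s i) r1 j t - nu * \sum_(j : N) P i j * stage_term P (shiftS s i) r2 j t.
  by rewrite mulr_sumr -sumrB; apply: eq_bigr => j _; ring.
ring.
Qed.

Lemma SR_shift s i : SR s -> SR (shiftS s i).
Proof. by move=> h x; apply: h. Qed.

Lemma SR01 s x : SR s -> 0 <= 1 - s x <= 1.
Proof. by move=> /(_ x) /andP [a b]; apply/andP; split; lra. Qed.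

Lemma ST_bound t : forall s (r : N -> R) i (M : R), SR s -> (forall x, `|r x| <= M) ->
  `|stage_term P s r i t| <= M.
Proof.
elim: t => [|t IH] s r i M hs hr.
  rewrite ST0 normrM.
  have /andP [a b] := SR01 [:: i] hs.
  rewrite (ger0_norm a); apply: le_trans (hr i); rewrite ler_piMl //.
rewrite STS normrM.
have /andP [a b] := SR01 [:: i] hs.
rewrite (ger0_norm a).
apply: le_trans (_ : (1 - s [:: i]) * M <= M); last first.
  by have := le_trans (normr_ge0 (r i)) (hr i); nra.
apply: ler_wpM2l => //.
apply: le_trans (ler_norm_sum _ _ _) _.
apply: le_trans (_ : \sum_(j : N) P i j * M <= M); last by rewrite -mulr_suml (proj2 hP) mul1r.
apply: ler_sum => j _; rewrite normrM ger0_norm ?(proj1 hP) //.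
by apply: ler_wpM2l; [exact: (proj1 hP) | apply: IH => //; exact: SR_shift].
Qed.

Lemma ST_ge0 t : forall s (r : N -> R) i, SR s -> (forall x, 0 <= r x) ->
  0 <= stage_term P s r i t.
Proof.
elim: t => [|t IH] s r i hs hr.
  by rewrite ST0; have /andP [a b] := SR01 [:: i] hs; apply: mulr_ge0.
rewrite STS; have /andP [a b] := SR01 [:: i] hs; apply: mulr_ge0 => //.
apply: sumr_ge0 => j _; apply: mulr_ge0; first exact: (proj1 hP).
by apply: IH => //; exact: SR_shift.
Qed.

Variable beta : R.
Hypothesis hb : 0 < beta < 1.

Definition PS s r i := series (fun t => beta ^+ t * stage_term P s r i t).

Lemma PS_S s r i n : PS s r i n.+1 =
  (1 - s [:: i]) * (r i + beta * \sum_(j : N) P i j * PS (shiftS s i) r j n).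
Proof.
rewrite /PS /series /= big_nat_recl // expr0 mul1r ST0.
have E : \sum_(0 <= k < n) beta ^+ k.+1 * stage_term P s r i k.+1 =
   (1 - s [:: i]) * (beta * \sum_(j : N) P i j *
        \sum_(0 <= k < n) beta ^+ k * stage_term P (shiftS s i) r j k).
  under [in RHS]eq_bigr do rewrite mulr_sumr.
  rewrite [in RHS]exchange_big /= !mulr_sumr; apply: eq_bigr => k _.
  rewrite STS.
  have -> : \sum_(j : N) P i j * (beta ^+ k * stage_term P (shiftS s i) r j k) =
     beta ^+ k * \sum_(j : N) P i j * stage_term P (shiftS s i) r j k.
    by rewrite mulr_sumr; apply: eq_bigr => j _; ring.
  rewrite exprS; ring.
rewrite E; ring.
Qed.

Lemma PS_cvg s r i : SR s -> cvgn (PS s r i).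
Proof.
move=> hs; rewrite /PS; apply: normed_cvg.
set M := \sum_(x : N) `|r x|.
have hr : forall x, `|r x| <= M.
  by move=> x; rewrite /M (bigD1 x) //= lerDl sumr_ge0.
have M0 : 0 <= M by rewrite sumr_ge0.
have b0 : 0 <= beta by case/andP: hb => /ltW.
apply: (@series_le_cvg _ _ (geometric M beta)).
- move=> n; exact: normr_ge0.
- by move=> n; rewrite /geometric /= mulr_ge0 // exprn_ge0.
- move=> n; rewrite /geometric /= normrM normrX ger0_norm // mulrC.
  by apply: ler_wpM2r; [exact: exprn_ge0 | exact: ST_bound].
- apply: is_cvg_geometric_series; rewrite ger0_norm //; by case/andP: hb.
Qed.

Lemma cvg_bigsum (I : Type) (rs : seq I) (F : I -> nat -> R) (l : I -> R) :
  (forall j, F j @ \oo --> l j)%classic ->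
  ((fun n => \sum_(j <- rs) F j n) @ \oo --> \sum_(j <- rs) l j)%classic.
Proof.
move=> h; elim: rs => [|x rs IH].
  rewrite big_nil.
  rewrite (_ : (fun n => \sum_(j <- [::]) F j n) = fun=> 0); last first.
    by apply: funext => n; rewrite big_nil.
  exact: cvg_cst.
rewrite big_cons.
rewrite (_ : (fun n => \sum_(j <- x :: rs) F j n) = F x + (fun n => \sum_(j <- rs) F j n)); last first.
  by apply: funext => n; rewrite big_cons.
exact: cvgD.
Qed.

Lemma D_step s r i : SR s -> disc_value P beta s r i =
  (1 - s [:: i]) * (r i + beta * \sum_(j : N) P i j * disc_value P beta (shiftS s i) r j).
Proof.
move=> hs; rewrite /disc_value -/(PS s r i).
apply: cvg_lim => //.
rewrite -cvg_shiftS.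
rewrite (_ : [sequence PS s r i n.+1]_n = fun n =>
   (1 - s [:: i]) * (r i + beta * \sum_(j : N) P i j * PS (shiftS s i) r j n)); last first.
  by apply: funext => n; rewrite /= PS_S.
apply: cvgMl_tmp; apply: cvgD; first exact: cvg_cst.
apply: cvgMl_tmp; apply: cvg_bigsum => j; apply: cvgMl_tmp.
exact: PS_cvg (SR_shift _ hs).
Qed.

Local Notation D s r i := (disc_value P beta s r i).

Lemma D_lin s r1 r2 nu i : SR s ->
  D s (fun x => r1 x - nu * r2 x) i = D s r1 i - nu * D s r2 i.
Proof.
move=> hs; rewrite /disc_value -/(PS s _ i) -/(PS s r1 i) -/(PS s r2 i).
apply: cvg_lim => //.
rewrite (_ : PS s _ i = fun n => PS s r1 i n - nu * PS s r2 i n); last first.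
  apply: funext => n; rewrite /PS /series /=.
  under eq_bigr do rewrite ST_lin.
  rewrite mulr_sumr -sumrB; apply: eq_bigr => k _; ring.
apply: cvgB; first exact: PS_cvg.
by apply: cvgMl_tmp; exact: PS_cvg.
Qed.

Lemma D_ext s1 s2 r i : (forall x h, s1 (x :: h) = s2 (x :: h)) -> D s1 r i = D s2 r i.
Proof.
move=> e; rewrite /disc_value.
rewrite (_ : (fun t => beta ^+ t * stage_term P s1 r i t) =
             (fun t => beta ^+ t * stage_term P s2 r i t)) //.
by apply: funext => t; rewrite (ST_ext _ _ _ e).
Qed.

Lemma D_ge0 s r i : SR s -> (forall x, 0 <= r x) -> 0 <= D s r i.
Proof.
move=> hs hr; rewrite /disc_value -/(PS s r i).
apply: limr_ge; first exact: PS_cvg.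
apply: nearW => n; rewrite /PS /series /=; apply: sumr_ge0 => k _.
apply: mulr_ge0; last exact: ST_ge0.
by apply: exprn_ge0; case/andP: hb => /ltW.
Qed.

Lemma PS_bound (V c : N -> R) : (forall j, 0 <= V j) ->
  (forall j, c j + beta * \sum_(k : N) P j k * V k <= V j) ->
  forall n s i, SR s -> PS s c i n <= V i.
Proof.
move=> V0 Vc; elim=> [|n IH] s i hs.
  by rewrite /PS /series /= big_geq.
rewrite PS_S.
have /andP [a b] := SR01 [:: i] hs.
have b0 : 0 <= beta by case/andP: hb => /ltW.
apply: le_trans (_ : (1 - s [:: i]) * (c i + beta * \sum_(k : N) P i k * V k) <= V i).
  apply: ler_wpM2l => //; rewrite lerD2l; apply: ler_wpM2l => //.
  apply: ler_sum => k _; apply: ler_wpM2l; first exact: (proj1 hP).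
  by apply: IH; exact: SR_shift.
have := Vc i; have := V0 i; nra.
Qed.

Lemma D_le s c i (V : N -> R) : SR s -> (forall n, PS s c i n <= V i) -> D s c i <= V i.
Proof.
move=> hs h; rewrite /disc_value -/(PS s c i).
apply: limr_le; first exact: PS_cvg.
exact: nearW.
Qed.

End T.

Unset Implicit Arguments. Set Strict Implicit.

Theorem proposition4 (R : realType) (N : finType) (P : N -> N -> R) (beta : R)
  (Rw : N -> R) (S : {set N}) (nu : R) :
  stochastic P -> 0 < beta < 1 ->
  ((forall (sigma : seq N -> R), stopping_rule sigma ->
      forall i : N,
        f_val P beta Rw sigma i - nu * g_val P beta sigma i
        <= f_val P beta Rw (tau_S S) i - nu * g_val P beta (tau_S S) i)
   <->
   ((forall j, j \notin S -> nuS P beta Rw S j <= nu) /\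
    (forall j, j \in S -> nu <= nuS P beta Rw S j))).
Proof.
move=> hP hb.
have b0 : 0 <= beta by case/andP: hb => /ltW.
set tS := tau_S S.
set c := fun x => Rw x - nu * (fun _ : N => (1 : R)) x.
have SRt : stopping_rule tS.
  by case=> [|x h] /=; [lra | case: (_ \notin S); rewrite /=; lra].
have Jeq : forall s i, stopping_rule s ->
    f_val P beta Rw s i - nu * g_val P beta s i = disc_value P beta s c i.
  by move=> s i hs; rewrite /f_val /g_val D_lin.
pose A r j := r j + beta * \sum_(k : N) P j k * disc_value P beta tS r k.
pose sj j := tS [:: j].
have Bell : forall r j, disc_value P beta tS r j = (1 - sj j) * A r j.
  move=> r j; rewrite D_step //; congr (_ * (_ + _ * _)).
  by apply: eq_bigr => k _; congr (_ * _); apply: D_ext.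
have sjE : forall j, sj j = (j \notin S)%:R by [].
have Ac : forall j, A c j = A Rw j - nu * A (fun _ => 1) j.
  move=> j; rewrite /A.
  under eq_bigr do rewrite D_lin //.
  rewrite /c.
  have -> : \sum_(k : N) P j k * (disc_value P beta tS Rw k - nu * disc_value P beta tS (fun=> 1) k)
     = \sum_(k : N) P j k * disc_value P beta tS Rw k - nu * \sum_(k : N) P j k * disc_value P beta tS (fun=> 1) k.
    by rewrite mulr_sumr -sumrB; apply: eq_bigr => k _; ring.
  ring.
have A1pos : forall j, 0 < A (fun _ => 1) j.
  move=> j; rewrite /A.
  have : 0 <= \sum_(k : N) P j k * disc_value P beta tS (fun=> 1) k.
    apply: sumr_ge0 => k _; apply: mulr_ge0; first exact: (proj1 hP).
    by apply: D_ge0.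
  nra.
have kpos : forall j, 0 < 1 - beta * (1 - sj j).
  by move=> j; rewrite sjE; case: (j \notin S); rewrite /=; case/andP: hb => ? ?; lra.
have nuSE : forall j, nuS P beta Rw S j = A Rw j / A (fun _ => 1) j.
  move=> j; rewrite /nuS /rS /wS /fS /gS /g_val /f_val -/tS.
  rewrite [disc_value P beta tS Rw j]Bell [disc_value P beta tS (fun=> 1) j]Bell.
  have -> : Rw j + beta * \sum_(j0 : N) P j j0 * disc_value P beta tS Rw j0 - beta * ((1 - sj j) * A Rw j)
     = (1 - beta * (1 - sj j)) * A Rw j by rewrite /A; ring.
  have -> : 1 + beta * \sum_(j0 : N) P j j0 * disc_value P beta tS (fun=> 1) j0 - beta * ((1 - sj j) * A (fun=> 1) j)
     = (1 - beta * (1 - sj j)) * A (fun=> 1) j by rewrite /A; ring.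
  have := kpos j; have := A1pos j; move: (A Rw j) (A (fun=> 1) j) (1 - beta * (1 - sj j)) => a b k hb' hk.
  field; apply/andP; split; exact: lt0r_neq0.
have le_nu : forall j, (nuS P beta Rw S j <= nu) = (A c j <= 0).
  by move=> j; rewrite nuSE Ac ler_pdivrMr // subr_le0.
have ge_nu : forall j, (nu <= nuS P beta Rw S j) = (0 <= A c j).
  by move=> j; rewrite nuSE Ac ler_pdivlMr // subr_ge0.
have VnS : forall j, j \notin S -> disc_value P beta tS c j = 0.
  by move=> j hj; rewrite Bell sjE hj /= subrr mul0r.
have VS : forall j, j \in S -> disc_value P beta tS c j = A c j.
  by move=> j hj; rewrite Bell sjE hj /= subr0 mul1r.
split.
  move=> opt; split.
    move=> j hj; rewrite le_nu.
    pose s1 : seq N -> R := fun h => if h is [:: _] then 0 else tS h.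
    have hs1 : stopping_rule s1.
      case=> [|x [|y h]] /=; try lra.
      by case: (_ \notin S); rewrite /=; lra.
    have := opt s1 hs1 j; rewrite !Jeq // VnS // D_step //.
    have -> : s1 [:: j] = 0 by [].
    rewrite subr0 mul1r.
    have -> : \sum_(k : N) P j k * disc_value P beta (shiftS s1 j) c k =
              \sum_(k : N) P j k * disc_value P beta tS c k.
      by apply: eq_bigr => k _; congr (_ * _); apply: D_ext.
    by [].
  move=> j hj; rewrite ge_nu -VS //.
  pose s0 : seq N -> R := fun _ => 1.
  have hs0 : stopping_rule s0 by move=> h; rewrite /s0; lra.
  have := opt s0 hs0 j; rewrite !Jeq // D_step //.
  by rewrite /s0 subrr mul0r.
move=> [hnS hS] sigma hs i.
rewrite !Jeq //.
apply: D_le => //.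
move=> n; apply: (@PS_bound _ _ P hP beta hb (fun j => disc_value P beta tS c j) c) => //.
  move=> j; case: (boolP (j \in S)) => hj.
    by rewrite VS // -ge_nu hS.
  by rewrite VnS.
move=> j; change (A c j <= disc_value P beta tS c j).
case: (boolP (j \in S)) => hj.
  by rewrite VS.
by rewrite VnS // -le_nu hnS.
Qed.
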